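(* If $v,w\in\mathfrak{H}$ are words in $x,y$ that are cyclically equivalent (one is obtained from the other by a cyclic permutation of its letters), then $\rho_{1,t}^{(\hbar)}(v)=\rho_{1,t}^{(\hbar)}(w)$.
   Context: Let $\hbar,t$ be formal variables and $\mathfrak{H}=\mathbb{Q}[\hbar,t]\langle x,y\rangle$. Let $\gamma_\hbar^t$ be the algebra automorphism of $\mathfrak{H}$ with $\gamma_\hbar^t(x)=x$, $\gamma_\hbar^t(y)=tx+y+\hbar t$. Make $\mathfrak{H}\otimes\mathfrak{H}$ (over $\mathbb{Q}[\hbar,t]$) an $\mathfrak{H}$-bimodule by $a\diamond(w_1\otimes w_2)=w_1\otimes aw_2$ and $(w_1\otimes w_2)\diamond b=w_1b\otimes w_2$. Let $\mathcal C_{1,t}^{(\hbar)}:\mathfrak{H}\to\mathfrak{H}\otimes\mathfrak{H}$ be the $\mathbb{Q}[\hbar,t]$-linear map with $\mathcal C_{1,t}^{(\hbar)}(x)=-\mathcal C_{1,t}^{(\hbar)}(y)=x\otimes y$ and $\mathcal C_{1,t}^{(\hbar)}(vw)=\mathcal C_{1,t}^{(\hbar)}(v)\diamond(\gamma_\hbar^t)^{-1}(w)+(\gamma_\hbar^t)^{-1}(v)\diamond\mathcal C_{1,t}^{(\hbar)}(w)$. Let $\rho_{1,t}^{(\hbar)}=M_1\circ\mathcal C_{1,t}^{(\hbar)}$ where $M_1(w_1\otimes w_2)=w_1w_2$. *)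

(* Defs.v *)
From HB Require Import structures.
From mathcomp Require Import all_boot all_order all_algebra.
Set Implicit Arguments. Unset Strict Implicit. Unset Printing Implicit Defensive.
Import GRing.Theory.
Local Open Scope ring_scope.

(* Coefficient ring Q[hbar, t], realised as Q[t][hbar]. *)
Definition coef : comNzRingType := {poly {poly rat}}.
Definition hbar : coef := 'X.
Definition tt_ : coef := ('X : {poly rat})%:P.

Definition letter := bool.
Definition lx : letter := false.
Definition ly : letter := true.
Definition word := seq letter.

(* H = Q[hbar,t]<x,y>, represented by coefficient functions on words
   (only finitely supported ones occur). *)
Definition H := word -> coef.
Definition hzero : H := fun _ => 0.
Definition hadd (f g : H) : H := fun w => f w + g w.
Definition hopp (f : H) : H := fun w => - f w.
Definition hscale (c : coef) (f : H) : H := fun w => c * f w.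
Definition hmul (f g : H) : H :=
  fun w => \sum_(i < (size w).+1) f (take i w) * g (drop i w).
Definition hword (u : word) : H := fun w => (w == u)%:R.
Definition hone : H := hword [::].

(* gamma^{-1}: the inverse of the automorphism gamma(x)=x, gamma(y)=tx+y+hbar t,
   i.e. gamma^{-1}(x)=x, gamma^{-1}(y) = y - t x - hbar t. *)
Definition ginv_letter (a : letter) : H :=
  if a then hadd (hword [:: ly])
             (hopp (hadd (hscale tt_ (hword [:: lx])) (hscale (hbar * tt_) hone)))
  else hword [:: lx].
Fixpoint ginv (w : word) : H :=
  match w with
  | [::] => hone
  | a :: w' => hmul (ginv_letter a) (ginv w')
  end.

(* H (x) H over Q[hbar,t], represented by coefficient functions on pairs of
   words (basis u1 (x) u2). *)
Definition HH := word -> word -> coef.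
Definition tzero : HH := fun _ _ => 0.
Definition tadd (m n : HH) : HH := fun u1 u2 => m u1 u2 + n u1 u2.
Definition topp (m : HH) : HH := fun u1 u2 => - m u1 u2.
Definition tens (p q : H) : HH := fun u1 u2 => p u1 * q u2.
(* bimodule structure: a <> (w1 (x) w2) = w1 (x) a w2 *)
Definition tleft (a : H) (m : HH) : HH :=
  fun u1 u2 => \sum_(i < (size u2).+1) a (take i u2) * m u1 (drop i u2).
(* (w1 (x) w2) <> b = w1 b (x) w2 *)
Definition tright (m : HH) (b : H) : HH :=
  fun u1 u2 => \sum_(i < (size u1).+1) m (take i u1) u2 * b (drop i u1).
Definition M1 (m : HH) : H :=
  fun w => \sum_(i < (size w).+1) m (take i w) (drop i w).

Definition C_letter (a : letter) : HH :=
  if a then topp (tens (hword [:: lx]) (hword [:: ly]))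
  else tens (hword [:: lx]) (hword [:: ly]).
(* C on the word basis, via C(a w) = C(a) <> gamma^{-1}(w) + gamma^{-1}(a) <> C(w)
   (the unique twisted derivation with the given values on generators; C(1)=0). *)
Fixpoint C1t (w : word) : HH :=
  match w with
  | [::] => tzero
  | a :: w' => tadd (tright (C_letter a) (ginv w')) (tleft (ginv_letter a) (C1t w'))
  end.

Definition rho1t (w : word) : H := M1 (C1t w).

(* Main.v *)
Require Import Defs.
From mathcomp Require Import all_boot all_order all_algebra.
From mathcomp Require Import ring.
From Stdlib Require Import FunctionalExtensionality.
Import GRing.Theory.
Local Open Scope ring_scope.

Definition shiftH (f : H) (a : letter) : H := fun s => f (a :: s).

Lemma hmul_nil f g : hmul f g [::] = f [::] * g [::].
Proof. by rewrite /hmul big_ord_recl big_ord0 addr0. Qed.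

Lemma hmul_cons f g a u :
  hmul f g (a :: u) = f [::] * g (a :: u) + hmul (shiftH f a) g u.
Proof. by rewrite /hmul /= big_ord_recl /=. Qed.

Lemma hmul_lin c p q h u :
  hmul (fun s => c * p s + q s) h u = c * hmul p h u + hmul q h u.
Proof.
rewrite /hmul mulr_sumr -big_split /=; apply eq_bigr => i _; ring.
Qed.

Lemma hmulA u : forall f g h, hmul f (hmul g h) u = hmul (hmul f g) h u.
Proof.
elim: u => [|a u IH] f g h.
  by rewrite !hmul_nil mulrA.
rewrite !hmul_cons IH hmul_nil.
have -> : shiftH (hmul f g) a = fun s => f [::] * shiftH g a s + hmul (shiftH f a) g s.
  by apply: functional_extensionality => s; rewrite /shiftH hmul_cons.
rewrite hmul_lin; ring.
Qed.

Lemma hmulA' f g h : hmul f (hmul g h) = hmul (hmul f g) h.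
Proof. by apply: functional_extensionality => u; apply: hmulA. Qed.

Lemma hmul1l f : hmul hone f = f.
Proof.
apply: functional_extensionality => -[|a u].
  by rewrite hmul_nil /hone /hword /= mul1r.
rewrite hmul_cons /hone /hword /= mul1r.
rewrite /hmul big1 ?addr0 // => i _; by rewrite /shiftH /= mul0r.
Qed.

Lemma hmul1r_pt u : forall f, hmul f hone u = f u.
Proof.
elim: u => [|a u IH] f.
  by rewrite hmul_nil /hone /hword /= mulr1.
by rewrite hmul_cons IH /hone /hword /= mulr0 add0r.
Qed.

Lemma ginv_cat s t : ginv (s ++ t) = hmul (ginv s) (ginv t).
Proof.
elim: s => [|a s IH] /=; first by rewrite hmul1l.
by rewrite IH hmulA'.
Qed.

Definition eps (a : letter) : coef := if a then -1 else 1.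
Definition X s := hmul (hword [:: lx]) (ginv s).
Definition Y s := hmul (ginv s) (hword [:: ly]).
Definition G s := hmul (hword [:: lx]) (Y s).

Lemma C_letterE a p q :
  C_letter a p q = eps a * (hword [:: lx] p * hword [:: ly] q).
Proof. by case: a; rewrite /C_letter /eps /topp /tens ?mulN1r ?mul1r. Qed.

Lemma trightE a b u1 u2 :
  tright (C_letter a) b u1 u2 = eps a * (hmul (hword [:: lx]) b u1 * hword [:: ly] u2).
Proof.
rewrite /tright /hmul; under eq_bigr => i _ do rewrite C_letterE.
rewrite mulr_suml mulr_sumr; apply eq_bigr => i _; ring.
Qed.

Lemma tleftE (g : H) (m : HH) n (e : 'I_n -> coef) (P Q : 'I_n -> H) u1 u2 :
  (forall v1 v2, m v1 v2 = \sum_(k < n) e k * (P k v1 * Q k v2)) ->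
  tleft g m u1 u2 = \sum_(k < n) e k * (P k u1 * hmul g (Q k) u2).
Proof.
move=> hm; rewrite /tleft /hmul.
under eq_bigr => i _ do rewrite hm mulr_sumr.
rewrite exchange_big /=; apply eq_bigr => k _.
rewrite !mulr_sumr; apply eq_bigr => i _; ring.
Qed.

Lemma C1tE w : forall u1 u2, C1t w u1 u2 =
  \sum_(k < size w) eps (nth lx w k) * (X (drop k.+1 w) u1 * Y (take k w) u2).
Proof.
elim: w => [|a w IH] u1 u2; first by rewrite /= big_ord0.
rewrite /= /tadd trightE (@tleftE _ _ _ (fun k => eps (nth lx w k)) (fun k => X (drop k.+1 w)) (fun k => Y (take k w)) _ _ IH) big_ord_recl /=.
rewrite drop0 /Y /= hmul1l; congr (_ + _).
apply eq_bigr => k _ /=.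
by rewrite hmulA'.
Qed.

Lemma rhoE w u : rho1t w u =
  \sum_(k < size w) eps (nth lx w k) * hmul (X (drop k.+1 w)) (Y (take k w)) u.
Proof.
rewrite /rho1t /M1.
under eq_bigr => i _ do rewrite C1tE.
rewrite exchange_big /=; apply eq_bigr => k _.
by rewrite /hmul mulr_sumr.
Qed.

Lemma XY_G s t : hmul (X s) (Y t) = G (s ++ t).
Proof. by rewrite /G /X /Y ginv_cat !hmulA'. Qed.

Definition T (s : word) (u : word) : coef :=
  if s is a :: s' then eps a * G s' u else 0.

Lemma rhoT w u : rho1t w u = \sum_(k < size w) T (rot k w) u.
Proof.
rewrite rhoE; apply eq_bigr => k _.
by rewrite /rot (drop_nth lx (ltn_ord k)) /= XY_G.
Qed.

Lemma rho_rot1 w u : rho1t (rot 1 w) u = rho1t w u.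
Proof.
case: w => [|a w]; first by [].
rewrite !rhoT size_rot.
have E : forall k : 'I_(size (a :: w)), rot k (rot 1 (a :: w)) = rot k.+1 (a :: w).
  by move=> k; rewrite -rotD ?addn1 // addn1 (ltn_ord k).
under eq_bigr => k _ do rewrite E.
rewrite /= big_ord_recr big_ord_recl /= ?rot0.
have -> : rot (size w).+1 (a :: w) = a :: w by exact: (rot_size (a :: w)).
by rewrite addrC /= cats0.
Qed.

Theorem proposition3p3 (v w : word) :
  (exists n : nat, w = rot n v) -> rho1t v = rho1t w.
Proof.
move=> [n ->]; elim: n => [|n IH]; first by rewrite rot0.
case: (leqP n.+1 (size v)) => h.
  rewrite rotS //; apply: functional_extensionality => u.
  by rewrite rho_rot1 IH.
by rewrite rot_oversize // ltnW.
Qed.
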